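(* Let $n$ be a positive even integer and $a=\sqrt[n]{n+1}$. Let $\eta:(-a,a)\to(-a,a)$ be the involution defined by $\eta(0)=0$ and, for $u\neq0$, $\eta(u)$ is the unique point with $u\,\eta(u)<0$ and $W(\eta(u))=W(u)$. Define $$T_n(u)=(n+1)\frac{\int_{\eta(u)}^{u}t^n\,dt}{\int_{\eta(u)}^{u}dt}=\sum_{k=0}^{n}u^{n-k}\eta(u)^k .$$ Then $T_n'(u)>0$ for all $u\in(0,a)$.
   Context: $W(u)=\frac{u^2}{2}-\frac{u^{n+2}}{(n+1)(n+2)}$; $W$ is strictly decreasing on $(-a,0)$ and strictly increasing on $(0,a)$, with $W(-a)=W(a)=d_n=\frac{n(n+1)^{2/n}}{2(n+2)}$, so $\eta$ is well defined. *)

(* Defs.v *)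
From HB Require Import structures.
From mathcomp Require Import all_boot all_order all_algebra.
From mathcomp Require Import all_classical all_reals all_analysis.
Unset Implicit Arguments. Unset Printing Implicit Defensive.
Import Order.TTheory GRing.Theory Num.Theory.
Local Open Scope classical_set_scope.
Local Open Scope ring_scope.

Definition Wn (R : realType) (n : nat) (u : R) : R :=
  u ^+ 2 / 2 - u ^+ n.+2 / ((n.+1 * n.+2)%:R).

Definition a_n (R : realType) (n : nat) : R := (n.+1)%:R `^ (n%:R)^-1.

Definition eta_n (R : realType) (n : nat) (u : R) : R :=
  if u == 0 then 0 else
  xget 0 [set v : R | - a_n R n < v < a_n R n /\ u * v < 0 /\ Wn R n v = Wn R n u].

Definition T_n (R : realType) (n : nat) (u : R) : R :=
  \sum_(k < n.+1) u ^+ (n - k) * (eta_n R n u) ^+ k.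

(* Main.v *)
Require Import Defs.
From HB Require Import structures.

From mathcomp Require Import all_boot all_order all_algebra.
From mathcomp Require Import all_classical all_reals all_analysis.
Import Order.TTheory GRing.Theory Num.Theory.
From mathcomp Require Import ring lra.
Import numFieldNormedType.Exports.
Local Open Scope ring_scope.
Section S.
Variable (R : realType) (n : nat).
Lemma dW (x : R) : is_derive x 1 (Wn R n) (x - x^+n.+1 / (n.+1)%:R).
Proof.
rewrite /Wn.
have -> : (fun u : R => u ^+ 2 / 2 - u ^+ n.+2 / (n.+1 * n.+2)%:R) =
  (((@id R) ^+ 2) * cst (2^-1)) - (((@id R) ^+ n.+2) * cst ((n.+1 * n.+2)%:R^-1)).
  by apply/funext => u; rewrite !fctE.
apply: is_derive_eq.
rewrite /= !fctE.
rewrite !scaler0 !add0r. rewrite /GRing.scale /= !mulr1 expr1 natrM. field. have := ler0n R n. by move=> h; apply/andP; split; apply/eqP; lra. Qed.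

Hypothesis hn : (0 < n)%N.
Hypothesis hev : ~~ odd n.

Lemma a_pos : 0 < a_n R n.
Proof. by rewrite /a_n powR_gt0 // ltr0n. Qed.

Lemma aXn : a_n R n ^+ n = n.+1%:R.
Proof.
rewrite /a_n -powR_mulrn ?powR_ge0 // -powRrM mulVf; last by rewrite pnatr_eq0 -lt0n.
by rewrite powRr1 // ler0n.
Qed.

Lemma tXn_lt (t : R) : 0 <= t -> t < a_n R n -> t ^+ n < n.+1%:R.
Proof.
move=> t0 ta; rewrite -aXn ltrXn2r //; by rewrite -lt0n.
Qed.

Lemma Wev (x : R) : Wn R n (- x) = Wn R n x.
Proof.
rewrite /Wn sqrrN [(- x) ^+ n.+2]exprNn -signr_odd /=.
by rewrite (negbTE hev) expr0 mul1r.
Qed.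

Lemma Wlt (x y : R) : 0 <= y -> y < x -> x < a_n R n -> Wn R n y < Wn R n x.
Proof.
move=> y0 yx xa.
have := @gtr0_derive1_lt R (Wn R n) 0 (a_n R n) _ _ true false.
apply.
- move=> t _; by case: (dW t).
- move=> t; rewrite in_itv /= => /andP[t0 ta].
  have dWt := dW t. rewrite derive1E derive_val.
  have h := @tXn_lt t (ltW t0) ta.
  have -> : t - t ^+ n.+1 / n.+1%:R = t * (1 - t ^+ n / n.+1%:R).
    rewrite exprS; field; apply/eqP; have := ler0n R n; lra.
  rewrite mulr_gt0 // subr_gt0 ltr_pdivrMr ?ltr0n // mul1r //.
- have hc : continuous (Wn R n).
    move=> t; apply: differentiable_continuous; apply/derivable1_diffP.
    by case: (dW t).
  exact: continuous_subspaceT hc.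
- by rewrite in_itv /= y0 (ltW (lt_trans yx xa)).
- by rewrite in_itv /= (ltW xa) (le_trans y0 (ltW yx)).
- exact: yx.
Qed.

Lemma etaE (v : R) : 0 < v < a_n R n -> eta_n R n v = - v.
Proof.
move=> /andP[v0 va].
rewrite /eta_n gt_eqF //.
apply: xget_unique.
- split; first by rewrite ltrN2 va /=; have := a_pos; lra.
  split; first by rewrite mulrN oppr_lt0 mulr_gt0.
  exact: Wev.
- move=> w [/andP[aw wa] [vw Ww]].
  have w0 : w < 0 by rewrite -(pmulr_rlt0 _ v0).
  have nw0 : 0 < - w by rewrite oppr_gt0.
  have nwa : - w < a_n R n by rewrite ltrNl.
  rewrite -Wev in Ww.
  apply: oppr_inj; rewrite opprK.
  case: (ltgtP (- w) v) => // h.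
  + by have := @Wlt v (- w) (ltW nw0) h va; rewrite Ww ltxx.
  + by have := @Wlt (- w) v (ltW v0) h nwa; rewrite Ww ltxx.
Qed.

Lemma sum_sign (m : nat) : \sum_(k < m) (-1) ^+ k = (odd m)%:R :> R.
Proof.
elim: m => [|m ih]; first by rewrite big_ord0.
rewrite big_ord_recr /= ih -signr_odd /=.
by case: (odd m) => /=; rewrite ?expr1 ?expr0 ?subrr ?add0r.
Qed.

Lemma TE (v : R) : 0 < v < a_n R n -> T_n R n v = v ^+ n.
Proof.
move=> hv; rewrite /T_n etaE //.
transitivity (\sum_(k < n.+1) (-1) ^+ k * v ^+ n).
  apply: eq_bigr => k _.
  by rewrite [(- v) ^+ k]exprNn mulrCA -exprD subnK // -ltnS ltn_ord.
by rewrite -mulr_suml sum_sign /= hev mul1r.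
Qed.
End S.

Theorem mainTheorem6 (R : realType) (n : nat) (hn : (0 < n)%N) (hev : ~~ odd n)
  (u : R) (hu : 0 < u < a_n R n) :
  derivable (T_n R n) u 1 /\ 0 < derive1 (T_n R n) u.
Proof.
have hnear : \forall v \near u, (@GRing.exp R ^~ n) v = T_n R n v.
  have hu' : u \in `]0, a_n R n[ by rewrite in_itv.
  move: (near_in_itvoo hu'); apply: filterS => v; rewrite in_itv /= => hv.
  by rewrite TE.
split.
  by apply: (near_eq_derivable hnear); exact: exprn_derivable.
rewrite derive1E -(near_eq_derive _ hnear) exp_derive /GRing.scale /= mulr1.
move/andP: hu => [u0 _].
by rewrite mulr_gt0 ?ltr0n ?exprn_gt0.
Qed.
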